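(* For each $n\ge1$, the map $\eta\circ\iota$ is a bijection between $\mathcal{T}_n$ (the set of triangles, up to similarity, having exact pedal period $n$) and $\mathcal{W}_n$ (the set of primitive two-dimensional words of dimension $2\times n$ over $\{0,1\}$).
   Context: Let $\Sigma=\{0,1\}$, $\Gamma=\{0,1,2,3\}$. A two-dimensional word of dimension $m\times n$ over $\Sigma$ is a map $\{0,\dots,m-1\}\times\{0,\dots,n-1\}\to\Sigma$; $W^{p\times q}$ is the $pm\times qn$ word with $W^{p\times q}[i,j]=W[i\bmod m,j\bmod n]$; $W$ is periodic if $W=V^{p\times q}$ for nonempty $V$ with $p\ge2$ or $q\ge2$, primitive otherwise. $\mathcal{W}_n$ is the set of primitive $2\times n$ words over $\Sigma$. $\eta$ sends $0\mapsto\begin{bmatrix}0\\1\end{bmatrix}$, $1\mapsto\begin{bmatrix}0\\0\end{bmatrix}$, $2\mapsto\begin{bmatrix}1\\1\end{bmatrix}$, $3\mapsto\begin{bmatrix}1\\0\end{bmatrix}$, extended to $w=w_0\cdots w_{n-1}\in\Gamma^n$ by letting the $j$th column of $\eta(w)$ be $\eta(w_j)$. Triangles up to similarity are sorted normalized angle triples in $C=\{(a,b,c)\in\mathbb{R}^3: a\ge b\ge c>0,\ a+b+c=1\}$ (angles $a\pi,b\pi,c\pi$); $C^*=\{(a,b,c)\in C: a\ne1/2\}$. Regions of $C^*$: $R_0=\{a<1/2\}$, $R_1=\{2a-1\ge2b,\ a>1/2\}$, $R_2=\{2b>2a-1\ge2c,\ a>1/2\}$, $R_3=\{2c>2a-1,\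 a>1/2\}$. Sorted pedal map $P:C^*\to C$: $P(a,b,c)=(1-2c,1-2b,1-2a)$ on $R_0$, $(2a-1,2b,2c)$ on $R_1$, $(2b,2a-1,2c)$ on $R_2$, $(2b,2c,2a-1)$ on $R_3$. $\mathcal{T}_n=\{p\in C: P^j(p)\text{ defined for }0\le j<n,\ P^n(p)=p,\ P^d(p)\ne p\text{ for }1\le d<n\}$. The itinerary $\iota(p)=w_0\cdots w_{n-1}\in\Gamma^n$ of $p\in\mathcal{T}_n$ is defined by $P^j(p)\in R_{w_j}$ for $0\le j<n$. *)

(* Defs.v *)
From mathcomp Require Import all_boot all_order all_algebra.
From mathcomp Require Import reals.
Set Implicit Arguments. Unset Strict Implicit. Unset Printing Implicit Defensive.
Import Order.TTheory GRing.Theory Num.Theory.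
Local Open Scope ring_scope.

Section Pedal.
Variable R : realType.

(* A (normalized) angle triple (a,b,c). *)
Definition triple := (R * R * R)%type.

Definition ta (x : triple) : R := x.1.1.
Definition tb (x : triple) : R := x.1.2.
Definition tc (x : triple) : R := x.2.

Definition inC (x : triple) : bool :=
  [&& tb x <= ta x, tc x <= tb x, 0 < tc x & ta x + tb x + tc x == 1].

Definition inCstar (x : triple) : bool := inC x && (ta x != 2^-1).

Definition inR0 (x : triple) : bool := inCstar x && (ta x < 2^-1).
Definition inR1 (x : triple) : bool :=
  [&& inCstar x, 2 * ta x - 1 >= 2 * tb x & ta x > 2^-1].
Definition inR2 (x : triple) : bool :=
  [&& inCstar x, 2 * tb x > 2 * ta x - 1, 2 * ta x - 1 >= 2 * tc x & ta x > 2^-1].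
Definition inR3 (x : triple) : bool :=
  [&& inCstar x, 2 * tc x > 2 * ta x - 1 & ta x > 2^-1].

Definition inRegion (k : nat) (x : triple) : bool :=
  match k with
  | 0 => inR0 x | 1 => inR1 x | 2 => inR2 x | 3 => inR3 x | _ => false
  end.

(* Sorted pedal map P : Cstar -> C, extended arbitrarily (identity) outside Cstar. *)
Definition pedal (x : triple) : triple :=
  let a := ta x in let b := tb x in let c := tc x in
  if inR0 x then (1 - 2 * c, 1 - 2 * b, 1 - 2 * a)
  else if inR1 x then (2 * a - 1, 2 * b, 2 * c)
  else if inR2 x then (2 * b, 2 * a - 1, 2 * c)
  else if inR3 x then (2 * b, 2 * c, 2 * a - 1)
  else x.

Definition inT (n : nat) (p : triple) : Prop :=
  [/\ inC p,
      (forall j, (j < n)%N -> inCstar (iter j pedal p)),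
      iter n pedal p = p
    & (forall d, (1 <= d)%N -> (d < n)%N -> iter d pedal p <> p)].

Definition regionOf (x : triple) : nat :=
  if inR0 x then 0 else if inR1 x then 1 else if inR2 x then 2 else 3.

Definition itinerary (n : nat) (p : triple) : 'I_n -> nat :=
  fun j => regionOf (iter j pedal p).

End Pedal.

(* eta : Gamma -> columns; Sigma = {0,1} encoded by bool (false = 0, true = 1).
   row 0 = top entry, row 1 = bottom entry. *)
Definition eta_col (g : nat) (i : 'I_2) : bool :=
  match g, nat_of_ord i with
  | 0, 0 => false | 0, _ => true
  | 1, 0 => false | 1, _ => false
  | 2, 0 => true  | 2, _ => true
  | _, 0 => true  | _, _ => false
  end.

Definition eta (n : nat) (w : 'I_n -> nat) : 'M[bool]_(2, n) :=
  \matrix_(i < 2, j < n) eta_col (w j) i.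

Definition periodic (m n : nat) (W : 'M[bool]_(m, n)) : Prop :=
  exists (m' n' p q : nat) (V : 'M[bool]_(m'.+1, n'.+1)),
    [/\ (p * m'.+1 = m)%N, (q * n'.+1 = n)%N, (2 <= p)%N || (2 <= q)%N
      & forall (i : 'I_m) (j : 'I_n),
          W i j = V (inord (i %% m'.+1)) (inord (j %% n'.+1))].

Definition primitive (m n : nat) (W : 'M[bool]_(m, n)) : Prop := ~ periodic W.

Arguments itinerary {R} n p _.

(* Main.v *)
Require Import Defs.
From mathcomp Require Import all_boot all_order all_algebra.
From mathcomp Require Import reals.
From mathcomp Require Import lra zify.
Set Implicit Arguments. Unset Strict Implicit. Unset Printing Implicit Defensive.
Import Order.TTheory GRing.Theory Num.Theory.
Local Open Scope ring_scope.

Inductive P3 := I3 | S01 | S02 | S12 | C1 | C2.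

Definition act (R : realType) (p : P3) (v : triple R) : triple R :=
  let: (a, b, c) := v in
  match p with
  | I3 => (a, b, c) | S01 => (b, a, c) | S02 => (c, b, a)
  | S12 => (a, c, b) | C1 => (b, c, a) | C2 => (c, a, b) end.

Definition comp (p q : P3) : P3 :=
  match p with
  | I3 => match q with I3 => I3 | S01 => S01 | S02 => S02 | S12 => S12 | C1 => C1 | C2 => C2 end
  | S01 => match q with I3 => S01 | S01 => I3 | S02 => C1 | S12 => C2 | C1 => S02 | C2 => S12 end
  | S02 => match q with I3 => S02 | S01 => C2 | S02 => I3 | S12 => C1 | C1 => S12 | C2 => S01 end
  | S12 => match q with I3 => S12 | S01 => C1 | S02 => C2 | S12 => I3 | C1 => S01 | C2 => S02 end
  | C1 => match q with I3 => C1 | S01 => S12 | S02 => S01 | S12 => S02 | C1 => C2 | C2 => I3 end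
  | C2 => match q with I3 => C2 | S01 => S02 | S02 => S12 | S12 => S01 | C1 => I3 | C2 => C1 end
  end.

Definition scale (R : realType) (t : R) (v : triple R) : triple R :=
  (t * ta v, t * tb v, t * tc v).
Definition diff (R : realType) (x y : triple R) : triple R :=
  (ta x - ta y, tb x - tb y, tc x - tc y).

Lemma act_comp (R : realType) p q (v : triple R) : act (comp p q) v = act p (act q v).
Proof. by case: v => [[a b] c]; case: p; case: q. Qed.

Lemma act_scale (R : realType) p t (v : triple R) : act p (scale t v) = scale t (act p v).
Proof. by case: v => [[a b] c]; case: p. Qed.

Lemma act6 (R : realType) p (v : triple R) :
  act p (act p (act p (act p (act p (act p v))))) = v.
Proof. by case: v => [[a b] c]; case: p. Qed.

Lemma scale_scale (R : realType) s t (v : triple R) : scale s (scale t v) = scale (s * t) v.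
Proof. by case: v => [[a b] c]; rewrite /scale /= !mulrA. Qed.

Lemma triple_eq (R : realType) (x y : triple R) :
  ta x = ta y -> tb x = tb y -> tc x = tc y -> x = y.
Proof. by case: x => [[a b] c]; case: y => [[a' b'] c']; rewrite /ta /tb /tc /= => -> -> ->. Qed.

Lemma fix_lin (R : realType) t p (v : triple R) :
  t ^+ 6 != 1 -> v = scale t (act p v) -> v = (0, 0, 0).
Proof.
move=> ht hv.
have h6 : v = scale (t ^+ 6) v.
  have e : v = scale t (act p (scale t (act p (scale t (act p (scale t (act p
              (scale t (act p (scale t (act p v))))))))))).
    by rewrite -!hv.
  by rewrite {1}e !act_scale !scale_scale act6 !exprS expr0 mulr1 !mulrA.
have key : forall z : R, z = t ^+ 6 * z -> z = 0.
  move=> z hz; apply/eqP; move: hz => /eqP.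
  rewrite -subr_eq0 -{1}(mul1r z) -mulrBl mulf_eq0 => /orP [|//].
  by rewrite subr_eq0 eq_sym (negbTE ht).
move: h6; case: v {hv} => [[a b] c] /= [ha hb hc].
by rewrite (key a ha) (key b hb) (key c hc).
Qed.

Lemma diff0 (R : realType) (x y : triple R) : diff x y = (0, 0, 0) -> x = y.
Proof.
case: x => [[a b] c]; case: y => [[a' b'] c']; rewrite /diff /ta /tb /tc /= => [[]].
move=> /eqP; rewrite subr_eq0 => /eqP -> /eqP; rewrite subr_eq0 => /eqP -> /eqP.
by rewrite subr_eq0 => /eqP ->.
Qed.

From mathcomp Require Import ring.

Definition g (R : realType) (k : nat) (y : triple R) : triple R :=
  let a := ta y in let b := tb y in let c := tc y in
  match k with
  | 0 => ((1 - c) / 2, (1 - b) / 2, (1 - a) / 2)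
  | 1 => ((a + 1) / 2, b / 2, c / 2)
  | 2 => ((b + 1) / 2, a / 2, c / 2)
  | _ => ((c + 1) / 2, a / 2, b / 2)
  end.

Definition gt (R : realType) (k : nat) : R := if k is 0 then - 2^-1 else 2^-1.
Definition gp (k : nat) : P3 := match k with 0 => S02 | 1 => I3 | 2 => S01 | _ => C2 end.

Lemma g_lin (R : realType) k (x y : triple R) :
  diff (g k x) (g k y) = scale (gt R k) (act (gp k) (diff x y)).
Proof.
case: x => [[a b] c]; case: y => [[a' b'] c'].
by case: k => [|[|[|k]]]; rewrite /diff /scale /g /gt /ta /tb /tc /=; congr (_, _, _); ring.
Qed.

Definition branch (R : realType) (k : nat) (x : triple R) : triple R :=
  let a := ta x in let b := tb x in let c := tc x in
  match k with
  | 0 => (1 - 2 * c, 1 - 2 * b, 1 - 2 * a)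
  | 1 => (2 * a - 1, 2 * b, 2 * c)
  | 2 => (2 * b, 2 * a - 1, 2 * c)
  | _ => (2 * b, 2 * c, 2 * a - 1)
  end.

Definition bt (R : realType) (k : nat) : R := if k is 0 then - 2 else 2.
Definition bp (k : nat) : P3 := match k with 0 => S02 | 1 => I3 | 2 => S01 | _ => C1 end.

Lemma branch_lin (R : realType) k (x y : triple R) :
  diff (branch k x) (branch k y) = scale (bt R k) (act (bp k) (diff x y)).
Proof.
case: x => [[a b] c]; case: y => [[a' b'] c'].
by case: k => [|[|[|k]]]; rewrite /diff /scale /branch /bt /ta /tb /tc /=; congr (_, _, _); ring.
Qed.

Lemma branch_g (R : realType) k (y : triple R) : branch k (g k y) = y.
Proof.
case: y => [[a b] c].
by case: k => [|[|[|k]]]; rewrite /branch /g /ta /tb /tc /=; congr (_, _, _); field.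
Qed.

Definition clC (R : realType) (y : triple R) : bool :=
  [&& tb y <= ta y, tc y <= tb y, 0 <= tc y & ta y + tb y + tc y == 1].

Lemma clCP (R : realType) (y : triple R) : clC y ->
  [/\ tb y <= ta y, tc y <= tb y, 0 <= tc y & ta y + tb y + tc y = 1].
Proof. by case/and4P => h1 h2 h3 /eqP h4. Qed.

Lemma inCP (R : realType) (y : triple R) : inC y ->
  [/\ tb y <= ta y, tc y <= tb y, 0 < tc y & ta y + tb y + tc y = 1].
Proof. by case/and4P => h1 h2 h3 /eqP h4. Qed.

Lemma inCstarP (R : realType) (y : triple R) : inCstar y ->
  [/\ tb y <= ta y, tc y <= tb y, 0 < tc y, ta y + tb y + tc y = 1 & ta y != 2^-1].
Proof. by case/andP => /inCP [h1 h2 h3 h4] h5. Qed.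

Ltac bsolve := repeat (apply/andP; split);
  lazymatch goal with
  | |- is_true (~~ (_ == _)) => apply/eqP => ?; lra
  | |- is_true (_ == _) => apply/eqP; lra
  | _ => lra end.

Lemma g_clC (R : realType) k (y : triple R) : clC y -> clC (g k y).
Proof.
case: y => [[a b] c] /clCP; rewrite /ta /tb /tc /= => -[h1 h2 h3 h4].
by case: k => [|[|[|k]]]; rewrite /clC /g /ta /tb /tc /=; bsolve.
Qed.

Lemma gR (R : realType) k (y : triple R) : (k <= 3)%N -> clC y -> 0 < tc y ->
  (k = 2%N -> tb y < ta y) -> (k = 3%N -> tc y < tb y) -> inRegion k (g k y).
Proof.
case: y => [[a b] c] hk /clCP; rewrite /ta /tb /tc /= => -[h1 h2 h3 h4] h5 h6 h7.
case: k hk h6 h7 => [|[|[|[|k]]]] // _ h6 h7;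
  rewrite /= /inR0 /inR1 /inR2 /inR3 /inCstar /inC /g /ta /tb /tc /=.
- bsolve.
- bsolve.
- have := h6 erefl; bsolve.
- have := h7 erefl; bsolve.
Qed.

Lemma regionOf_le3 (R : realType) (x : triple R) : (regionOf x <= 3)%N.
Proof. by rewrite /regionOf; case: ifP => //; case: ifP => //; case: ifP. Qed.

Lemma inR_real (R : realType) k (x : triple R) : inRegion k x ->
  match k with
  | 0 => is_true (ta x < 2^-1)
  | 1 => 2 * tb x <= 2 * ta x - 1 /\ 2^-1 < ta x
  | 2 => [/\ 2 * ta x - 1 < 2 * tb x, 2 * tc x <= 2 * ta x - 1 & 2^-1 < ta x]
  | 3 => 2 * ta x - 1 < 2 * tc x /\ 2^-1 < ta x
  | _ => False end.
Proof.
case: k => [|[|[|[|k]]]] //=.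
- by case/andP.
- by case/and3P.
- by case/and4P.
- by case/and3P.
Qed.

Lemma inR_Cstar (R : realType) k (x : triple R) : inRegion k x -> inCstar x.
Proof.
case: k => [|[|[|[|k]]]] //=.
- by case/andP.
- by case/and3P.
- by case/and4P.
- by case/and3P.
Qed.

Lemma regionOf_inR (R : realType) k (x : triple R) : inRegion k x -> regionOf x = k.
Proof.
move=> h; have hC := inR_Cstar h; have hr := inR_real h.
have := inCstarP hC => -[c1 c2 c3 c4 c5].
rewrite /regionOf.
case: k h hr => [|[|[|[|k]]]] //= h hr.
- by rewrite h.
- case: hr => hr1 hr2.
  have -> : inR0 x = false by rewrite /inR0 hC /=; apply/negbTE; rewrite -leNgt; lra.
  by rewrite h.
- case: hr => hr1 hr2 hr3.
  have -> : inR0 x = false by rewrite /inR0 hC /=; apply/negbTE; rewrite -leNgt; lra.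
  have -> : inR1 x = false by rewrite /inR1 hC /=; apply/negbTE; apply/negP => /andP [h1 h2]; lra.
  by rewrite h.
- case: hr => hr1 hr2.
  have -> : inR0 x = false by rewrite /inR0 hC /=; apply/negbTE; rewrite -leNgt; lra.
  have -> : inR1 x = false by rewrite /inR1 hC /=; apply/negbTE; apply/negP => /andP [h1 h2]; lra.
  have -> : inR2 x = false by rewrite /inR2 hC /=; apply/negbTE; apply/negP => /and3P [h1 h2 h3]; lra.
  done.
Qed.

Lemma regionOf_Cstar (R : realType) (x : triple R) : inCstar x -> inRegion (regionOf x) x.
Proof.
move=> hC; have := inCstarP hC => -[h1 h2 h3 h4 h5].
have h5' : ta x < 2^-1 \/ 2^-1 < ta x.
  by move: h5; rewrite neq_lt => /orP [] ?; [left|right].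
rewrite /regionOf; case: ifP => // h0.
have ha : 2^-1 < ta x.
  case: h5' => // hlt; move: h0; rewrite /inR0 hC /= => /negbT; rewrite -leNgt; lra.
case: ifP => // h1'; case: ifP => // h2'.
rewrite /= /inR3 hC ha /= andbT.
move: h1' h2'; rewrite /inR1 /inR2 hC ha /= !andbT => /negbT h1' /negbT.
move: h1'; rewrite -!ltNge => h1'.
rewrite h1' /= -ltNge; lra.
Qed.

Lemma pedal_branch (R : realType) (x : triple R) : inCstar x -> pedal x = branch (regionOf x) x.
Proof.
move=> hC; have := regionOf_Cstar hC.
rewrite /pedal /regionOf.
case: ifP => // h0; case: ifP => // h1; case: ifP => // h2 /= h3; by rewrite h3.
Qed.

Lemma act_I3 (R : realType) (v : triple R) : act I3 v = v.
Proof. by case: v => [[a b] c]. Qed.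
Lemma scale1 (R : realType) (v : triple R) : scale 1 v = v.
Proof. by case: v => [[a b] c]; rewrite /scale /ta /tb /tc /= !mul1r. Qed.

Lemma iter_lin (R : realType) (p q : triple R) m :
  (forall j, (j < m)%N -> [/\ inCstar (iter j (@pedal R) p), inCstar (iter j (@pedal R) q)
       & regionOf (iter j (@pedal R) p) = regionOf (iter j (@pedal R) q)]) ->
  exists t pi, diff (iter m (@pedal R) p) (iter m (@pedal R) q) = scale t (act pi (diff p q))
     /\ t ^+ 2 = (2 ^+ m) ^+ 2.
Proof.
elim: m => [|m IH] h.
  exists 1, I3; rewrite act_I3 scale1; by split.
have [t [pi [e1 e2]]] := IH (fun j hj => h j (ltnW hj)).
have [hp hq hr] := h m (ltnSn m).
exists (bt R (regionOf (iter m (@pedal R) p)) * t), (comp (bp (regionOf (iter m (@pedal R) p))) pi).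
split.
  rewrite !iterS (pedal_branch hp) (pedal_branch hq) -hr branch_lin e1.
  by rewrite act_scale scale_scale act_comp.
set k := regionOf _.
have -> : (bt R k * t) ^+ 2 = bt R k ^+ 2 * t ^+ 2 by ring.
have -> : bt R k ^+ 2 = 2 ^+ 2 by case: k => [|k] /=; rewrite ?sqrrN.
rewrite e2 (exprS 2 m); move: (2 ^+ m : R) => z; ring.
Qed.

Lemma pow6_ne1 (R : realType) (t : R) m : (1 <= m)%N -> t ^+ 2 = (2 ^+ m) ^+ 2 -> t ^+ 6 != 1.
Proof.
move=> hm ht.
have -> : t ^+ 6 = (t ^+ 2) ^+ 3 by rewrite -exprM.
rewrite ht -!exprM; apply/negP => /eqP h.
have : (1 : R) < 2 ^+ (m * (2 * 3)).
  by rewrite exprn_egt1 ?ltr1n // muln_eq0 negb_or -lt0n hm.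
by rewrite h ltxx.
Qed.

Lemma uniq_orbit (R : realType) (p q : triple R) n : (1 <= n)%N ->
  (forall j, (j < n)%N -> [/\ inCstar (iter j (@pedal R) p), inCstar (iter j (@pedal R) q)
       & regionOf (iter j (@pedal R) p) = regionOf (iter j (@pedal R) q)]) ->
  iter n (@pedal R) p = p -> iter n (@pedal R) q = q -> p = q.
Proof.
move=> hn h ep eq.
have [t [pi [e1 e2]]] := iter_lin h.
rewrite ep eq in e1.
apply: diff0; exact: (fix_lin (pow6_ne1 hn e2) e1).
Qed.

Lemma fix_scale (R : realType) (r : R) (v : triple R) :
  r != 1 -> v = scale r v -> v = (0, 0, 0).
Proof.
move=> ht.
have key : forall z : R, z = r * z -> z = 0.
  move=> z hz; apply/eqP; move: hz => /eqP.
  rewrite -subr_eq0 -{1}(mul1r z) -mulrBl mulf_eq0 => /orP [|//].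
  by rewrite subr_eq0 eq_sym (negbTE ht).
case: v => [[a b] c]; rewrite /scale /ta /tb /tc /= => -[ha hb hc].
by rewrite (key a ha) (key b hb) (key c hc).
Qed.

Definition isLin (R : realType) (F : triple R -> triple R) (t : R) (pi : P3) :=
  forall x y, diff (F x) (F y) = scale t (act pi (diff x y)).

Lemma lin6 (R : realType) F (t : R) pi : isLin F t pi ->
  forall x y, diff (iter 6 F x) (iter 6 F y) = scale (t ^+ 6) (diff x y).
Proof.
move=> hF x y; rewrite /= !hF !act_scale !scale_scale act6.
by rewrite !exprS expr0 mulr1 !mulrA.
Qed.

Definition orig (R : realType) : triple R := (0, 0, 0).

Definition fixpt (R : realType) (F : triple R -> triple R) (r : R) :=
  scale ((1 - r)^-1) (iter 6 F (orig R)).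

Lemma fixpt6 (R : realType) F (t : R) pi : isLin F t pi -> t ^+ 6 != 1 ->
  iter 6 F (fixpt F (t ^+ 6)) = fixpt F (t ^+ 6).
Proof.
move=> hF ht.
have h := lin6 hF (fixpt F (t ^+ 6)) (orig R).
have hr : 1 - t ^+ 6 != 0 by rewrite subr_eq0 eq_sym.
move: h; rewrite /fixpt.
case: (iter 6 F (scale _ _)) => [[A B] C].
case: (iter 6 F (orig R)) => [[a b] c].
rewrite /diff /scale /orig /ta /tb /tc /= => -[hA hB hC].
congr (_, _, _).
- move: hA => /eqP; rewrite subr_eq => /eqP ->; by rewrite subr0; field.
- move: hB => /eqP; rewrite subr_eq => /eqP ->; by rewrite subr0; field.
- move: hC => /eqP; rewrite subr_eq => /eqP ->; by rewrite subr0; field.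
Qed.

Lemma fix_uniq (R : realType) F (t : R) pi x y : isLin F t pi -> t ^+ 6 != 1 ->
  F x = x -> F y = y -> x = y.
Proof.
move=> hF ht hx hy; apply: diff0; apply: (fix_lin (p := pi) ht).
by rewrite -hF hx hy.
Qed.

Lemma fixpt_fix (R : realType) F (t : R) pi : isLin F t pi -> t ^+ 6 != 1 ->
  F (fixpt F (t ^+ 6)) = fixpt F (t ^+ 6).
Proof.
move=> hF ht; set z := fixpt F _.
have hz : iter 6 F z = z by exact: fixpt6.
have hFz : iter 6 F (F z) = F z by rewrite -iterSr iterS hz.
have hr : t ^+ 6 != 1 := ht.
apply: diff0; apply: (fix_scale hr).
by have := lin6 hF (F z) z; rewrite hFz hz.
Qed.

Lemma iter_clC (R : realType) (F : triple R -> triple R) m y :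
  (forall y, clC y -> clC (F y)) -> clC y -> clC (iter m F y).
Proof. by move=> hF hy; elim: m => [|m IH] //=; apply: hF. Qed.

Lemma fixpt_clC (R : realType) F (t : R) pi : isLin F t pi -> t ^+ 6 != 1 ->
  0 <= t ^+ 6 -> t ^+ 6 < 1 -> (forall y, clC y -> clC (F y)) ->
  clC (fixpt F (t ^+ 6)).
Proof.
move=> hF ht h0 h1 hC; set z := fixpt F _; set r := t ^+ 6 in h0 h1 z *.
have hz : iter 6 F z = z by exact: fixpt6.
have key : forall y, clC y -> [/\ tb (iter 6 F y) <= ta (iter 6 F y),
    tc (iter 6 F y) <= tb (iter 6 F y), 0 <= tc (iter 6 F y)
  & ta (iter 6 F y) + tb (iter 6 F y) + tc (iter 6 F y) = 1] /\
    diff (iter 6 F y) z = scale r (diff y z).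
  move=> y hy; split; first by apply: clCP; apply: iter_clC.
  by have := lin6 hF y z; rewrite hz.
have hy1 : clC ((2^-1, 2^-1, 0) : triple R) by rewrite /clC /ta /tb /tc /=; bsolve.
have hy2 : clC ((1, 0, 0) : triple R) by rewrite /clC /ta /tb /tc /=; bsolve.
have [[a1 b1 c1 d1] e1] := key _ hy1.
have [[a2 b2 c2 d2] e2] := key _ hy2.
move: a1 b1 c1 d1 e1 a2 b2 c2 d2 e2.
case: (iter 6 F (2^-1, 2^-1, 0)) => [[A1 B1] C1].
case: (iter 6 F (1, 0, 0)) => [[A2 B2] C2].
clear key hz; clearbody z; case: z => [[za zb] zc].
rewrite /diff /scale /ta /tb /tc /= => a1 b1 c1 d1 [e1 f1 g1] a2 b2 c2 d2 [e2 f2 g2].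
have hA1 : A1 = za + r * (2^-1 - za) by rewrite -e1; ring.
have hB1 : B1 = zb + r * (2^-1 - zb) by rewrite -f1; ring.
have hA2 : A2 = za + r * (1 - za) by rewrite -e2; ring.
have hB2 : B2 = zb + r * (0 - zb) by rewrite -f2; ring.
have hC2 : C2 = zc + r * (0 - zc) by rewrite -g2; ring.
rewrite hA1 hB1 in a1; rewrite hA2 hB2 hC2 in b2 c2 d2.
have hr : 0 < 1 - r by lra.
rewrite /clC /ta /tb /tc /=.
apply/and4P; split.
- have : 0 <= (1 - r) * (za - zb) by move: a1; rewrite -subr_ge0 => h; rewrite -[X in _ <= X]addr0 -(subrr (r * 2^-1)) -subr_ge0; lra.
  by rewrite pmulr_rge0 // subr_ge0.
- have : 0 <= (1 - r) * (zb - zc) by nra.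
  by rewrite pmulr_rge0 // subr_ge0.
- have : 0 <= (1 - r) * zc by nra.
  by rewrite pmulr_rge0.
- have : (1 - r) * (za + zb + zc - 1) = 0 by nra.
  move/eqP; rewrite mulf_eq0 (negbTE (lt0r_neq0 hr)) /= subr_eq0 => /eqP ->.
  done.
Qed.

Fixpoint Gs (R : realType) (w : nat -> nat) (j m : nat) (y : triple R) : triple R :=
  match m with 0 => y | m'.+1 => g (w j) (Gs w j.+1 m' y) end.

Lemma Gs_lin (R : realType) w m j : exists (t : R) pi,
  isLin (Gs w j m) t pi /\ t ^+ 2 = (2^-1 ^+ m) ^+ 2.
Proof.
elim: m j => [|m IH] j.
  by exists 1, I3; split => // x y; rewrite act_I3 scale1.
have [t [pi [h1 h2]]] := IH j.+1.
exists (gt R (w j) * t), (comp (gp (w j)) pi); split.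
  by move=> x y /=; rewrite g_lin h1 act_scale scale_scale -act_comp.
set k := w j.
have -> : (gt R k * t) ^+ 2 = gt R k ^+ 2 * t ^+ 2 by ring.
have -> : gt R k ^+ 2 = 2^-1 ^+ 2 by case: k => [|k] /=; rewrite ?sqrrN.
rewrite h2 (exprS 2^-1 m); move: (2^-1 ^+ m : R) => z; ring.
Qed.

Lemma Gs_clC (R : realType) w m j (y : triple R) : clC y -> clC (Gs w j m y).
Proof. by elim: m j => [|m IH] j //= hy; apply: g_clC; apply: IH. Qed.

Lemma GsSr (R : realType) w m j (y : triple R) :
  Gs w j m.+1 y = Gs w j m (g (w (j + m)%N) y).
Proof.
elim: m j => [|m IH] j; first by rewrite /= addn0.
change (g (w j) (Gs w j.+1 m.+1 y) = g (w j) (Gs w j.+1 m (g (w (j + m.+1)%N) y))).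
by rewrite IH addSnnS.
Qed.

Lemma Gs_ext (R : realType) w w' m j j' (y : triple R) :
  (forall i, w (j + i)%N = w' (j' + i)%N) -> Gs w j m y = Gs w' j' m y.
Proof.
elim: m j j' => [|m IH] j j' h //=.
congr (g _ _); first by have := h 0%N; rewrite !addn0.
by apply: IH => i; have := h i.+1; rewrite !addnS !addSn.
Qed.

Lemma t6_facts (R : realType) (t : R) n : (1 <= n)%N -> t ^+ 2 = (2^-1 ^+ n) ^+ 2 ->
  [/\ t ^+ 6 != 1, 0 <= t ^+ 6, t ^+ 6 < 1 & t ^+ 6 = ((2^-1 ^+ n) ^+ 2) ^+ 3].
Proof.
move=> hn ht.
have e : t ^+ 6 = ((2^-1 ^+ n) ^+ 2) ^+ 3 by rewrite -ht -exprM.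
have h0 : 0 <= t ^+ 6 by rewrite e exprn_ge0 // sqr_ge0.
have h1 : t ^+ 6 < 1.
  have h2 : (2^-1 : R) < 1 by lra.
  have h3 : (0 : R) <= 2^-1 by lra.
  rewrite e -!exprM exprn_ilt1 //.
  by rewrite !muln_eq0 !negb_or -lt0n hn.
by split => //; rewrite lt_eqF.
Qed.

Definition rr (R : realType) (n : nat) : R := ((2^-1 ^+ n) ^+ 2) ^+ 3.
Definition Xo (R : realType) (w : nat -> nat) (n j : nat) : triple R :=
  fixpt (Gs w j n) (rr R n).

Lemma Xo_spec (R : realType) w n j : (1 <= n)%N ->
  Gs w j n (Xo R w n j) = Xo R w n j /\ clC (Xo R w n j).
Proof.
move=> hn; have [t [pi [h1 h2]]] := Gs_lin R w n j.
have [f1 f2 f3 f4] := t6_facts hn h2.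
rewrite /Xo /rr -f4; split; first exact: fixpt_fix h1 f1.
apply: fixpt_clC h1 f1 f2 f3 _ => y; exact: Gs_clC.
Qed.

Lemma Gs_uniq (R : realType) w n j (x y : triple R) : (1 <= n)%N ->
  Gs w j n x = x -> Gs w j n y = y -> x = y.
Proof.
move=> hn hx hy; have [t [pi [h1 h2]]] := Gs_lin R w n j.
have [f1 f2 f3 f4] := t6_facts hn h2.
exact: fix_uniq h1 f1 hx hy.
Qed.

Lemma Xo_step (R : realType) w n j : (1 <= n)%N -> (forall i, w (i + n)%N = w i) ->
  Xo R w n j = g (w j) (Xo R w n j.+1).
Proof.
move=> hn hw.
have [e1 _] := Xo_spec R w j.+1 hn.
apply: (Gs_uniq (w := w) (n := n) (j := j) hn); first by case: (Xo_spec R w j hn).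
case: n hn hw e1 => [//|n'] hn hw e1.
rewrite GsSr addSnnS hw in e1.
by rewrite /= e1.
Qed.

Lemma Xo_per (R : realType) w n j : (1 <= n)%N -> (forall i, w (i + n)%N = w i) ->
  Xo R w n (j + n) = Xo R w n j.
Proof.
move=> hn hw.
apply: (Gs_uniq (w := w) (n := n) (j := j) hn); last by case: (Xo_spec R w j hn).
have [e1 _] := Xo_spec R w (j + n) hn.
rewrite -{2}e1; apply: Gs_ext => i.
by rewrite addnAC hw.
Qed.

Definition e3 (R : realType) : triple R := (3^-1, 3^-1, 3^-1).
Definition v100 (R : realType) : triple R := (1, 0, 0).
Definition isoE (R : realType) (x : triple R) : Prop := ta x = tb x \/ tb x = tc x.

Ltac dy y := case: y => [[a b] c] /clCP; rewrite /ta /tb /tc /= => -[y1 y2 y3 y4].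

Lemma gc0 (R : realType) k (y : triple R) : clC y -> tc (g k y) = 0 -> tc y = 0.
Proof.
dy y; case: k => [|[|[|k]]]; rewrite /g /ta /tb /tc /= => h; lra.
Qed.

Lemma gc0' (R : realType) k (y : triple R) : clC y -> (k = 0 \/ k = 3)%N ->
  tc (g k y) = 0 -> y = v100 R.
Proof.
dy y; case=> -> ; rewrite /g /ta /tb /tc /v100 /= => h; congr (_, _, _); lra.
Qed.

Lemma g100 (R : realType) k (y : triple R) : clC y -> (k <= 3)%N ->
  g k y = v100 R -> k = 1%N /\ y = v100 R.
Proof.
dy y; case: k => [|[|[|[|k]]]] //= _; rewrite /g /ta /tb /tc /v100 /= => -[h1 h2 h3];
  try (exfalso; lra).
split => //; congr (_, _, _); lra.
Qed.

Lemma gE (R : realType) k (y : triple R) : clC y -> 0 < tc y -> isoE (g k y) -> isoE y.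
Proof.
dy y => hc; rewrite /isoE /ta /tb /tc /=.
case: k => [|[|[|k]]]; rewrite /g /ta /tb /tc /= => -[h|h].
- right; lra.
- left; lra.
- lra.
- right; lra.
- lra.
- have h' : a = c by lra. left; lra.
- lra.
- left; lra.
Qed.

Lemma gE2 (R : realType) (y : triple R) : clC y -> 0 < tc y -> ta y = tb y ->
  isoE (g 2 y) -> y = e3 R.
Proof.
dy y => hc hab; rewrite /isoE /g /e3 /ta /tb /tc /= => -[h|h]; first (exfalso; lra).
congr (_, _, _); lra.
Qed.

Lemma gE3 (R : realType) (y : triple R) : clC y -> 0 < tc y -> tb y = tc y ->
  isoE (g 3 y) -> y = e3 R.
Proof.
dy y => hc hbc; rewrite /isoE /g /e3 /ta /tb /tc /= => -[h|h]; first (exfalso; lra).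
congr (_, _, _); lra.
Qed.

Lemma ge3 (R : realType) k (y : triple R) : clC y -> (k <= 3)%N ->
  g k y = e3 R -> k = 0%N /\ y = e3 R.
Proof.
dy y; case: k => [|[|[|[|k]]]] //= _; rewrite /g /ta /tb /tc /e3 /= => -[h1 h2 h3];
  try (exfalso; lra).
split => //; congr (_, _, _); lra.
Qed.

Record OH (R : realType) (X : nat -> triple R) (w : nat -> nat) (n : nat) : Prop := {
  oh_n : (1 <= n)%N;
  oh_w3 : forall j, (w j <= 3)%N;
  oh_wp : forall j, w (j + n)%N = w j;
  oh_c : forall j, clC (X j);
  oh_g : forall j, X j = g (w j) (X j.+1);
  oh_p : forall j, X (j + n)%N = X j }.

Lemma oh_perk (R : realType) X w n (h : OH X w n) j k : X (j + k * n)%N = X j :> triple R.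
Proof.
elim: k => [|k IH]; first by rewrite mul0n addn0.
by rewrite mulSn addnCA addnC (oh_p h) IH.
Qed.

Lemma oh_fwd (R : realType) X w n (h : OH X w n) (Q : triple R -> Prop) m :
  (forall j, Q (X j) -> Q (X j.+1)) -> Q (X m) -> forall j, Q (X j).
Proof.
move=> hs hm.
have hi : forall i, Q (X (m + i)%N).
  by elim=> [|i IH]; [rewrite addn0 | rewrite addnS; apply: hs].
move=> j; rewrite -(oh_perk h j m).
have hmn : (m <= j + m * n)%N.
  have := oh_n h => hn; apply: leq_trans (leq_addl _ _).
  by rewrite -{1}(muln1 m) leq_mul2l hn orbT.
by rewrite -(subnKC hmn); apply: hi.
Qed.

Lemma oh_cpos (R : realType) X w n (h : OH X w n) :
  (exists j0, w j0 = 0%N \/ w j0 = 3%N) -> forall j, 0 < tc (X j) :> R.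
Proof.
move=> [j0 hj0] j; rewrite lt_neqAle.
have [_ _ hc _] := clCP (oh_c h j); rewrite hc andbT.
apply/negP => /eqP hz.
have all0 : forall i, tc (X i) = 0.
  apply: (oh_fwd h (Q := fun x => tc x = 0) (m := j)); last by rewrite -hz.
  by move=> i hi; apply: (gc0 (k := w i)) => //; [exact: (oh_c h) | rewrite -(oh_g h)].
have h1 : X j0.+1 = v100 R.
  apply: (gc0' (k := w j0)); [exact: (oh_c h) | exact: hj0 | by rewrite -(oh_g h)].
have all1 : forall i, X i = v100 R.
  apply: (oh_fwd h (Q := fun x => x = v100 R) (m := j0.+1)) => // i hi.
  have [_ ->] := g100 (oh_c h i.+1) (oh_w3 h i) (etrans (esym (oh_g h i)) hi).
  done.
have [hw _] := g100 (oh_c h j0.+1) (oh_w3 h j0) (etrans (esym (oh_g h j0)) (all1 j0)).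
by case: hj0; rewrite hw.
Qed.

Lemma oh_strict (R : realType) X w n (h : OH X w n) :
  (forall j, 0 < tc (X j) :> R) -> forall j,
  (w j = 2%N -> tb (X j.+1) < ta (X j.+1)) /\ (w j = 3%N -> tc (X j.+1) < tb (X j.+1)).
Proof.
move=> hpos.
have hiso : forall m, isoE (X m) -> forall j, isoE (X j).
  move=> m hm; apply: (oh_fwd h (Q := @isoE R) (m := m)) => // i hi.
  apply: (gE (k := w i)); [exact: (oh_c h) | exact: hpos | by rewrite -(oh_g h)].
have he3 : forall m, X m = e3 R -> forall i, w i = 0%N.
  move=> m hm.
  have all : forall i, X i = e3 R.
    apply: (oh_fwd h (Q := fun x => x = e3 R) (m := m)) => // i hi.
    by have [_ ->] := ge3 (oh_c h i.+1) (oh_w3 h i) (etrans (esym (oh_g h i)) hi).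
  move=> i.
  by have [hw _] := ge3 (oh_c h i.+1) (oh_w3 h i) (etrans (esym (oh_g h i)) (all i)).
move=> j; split => hw.
- have [hb _ _ _] := clCP (oh_c h j.+1).
  rewrite lt_neqAle hb andbT; apply/negP => /eqP heq.
  have hj := hiso j.+1 (or_introl (esym heq)) j.
  rewrite (oh_g h j) hw in hj.
  have := gE2 (oh_c h j.+1) (hpos _) (esym heq) hj.
  by move/he3 => /(_ j); rewrite hw.
- have [_ hb _ _] := clCP (oh_c h j.+1).
  rewrite lt_neqAle hb andbT; apply/negP => /eqP heq.
  have hj := hiso j.+1 (or_intror (esym heq)) j.
  rewrite (oh_g h j) hw in hj.
  have := gE3 (oh_c h j.+1) (hpos _) (esym heq) hj.
  by move/he3 => /(_ j); rewrite hw.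
Qed.

Lemma oh_region (R : realType) X w n (h : OH X w n) :
  (exists j0, w j0 = 0%N \/ w j0 = 3%N) -> forall j, inRegion (w j) (X j :> triple R).
Proof.
move=> hj0 j.
have hpos := oh_cpos h hj0.
have [s2 s3] := oh_strict h hpos j.
rewrite (oh_g h j); apply: gR => //; [exact: (oh_w3 h) | exact: (oh_c h)].
Qed.

Lemma oh_iter (R : realType) X w n (h : OH X w n) :
  (exists j0, w j0 = 0%N \/ w j0 = 3%N) -> forall j,
  iter j (@pedal R) (X 0%N) = X j /\ regionOf (X j) = w j.
Proof.
move=> hj0; have hr := oh_region h hj0.
have hreg : forall j, regionOf (X j) = w j by move=> j; exact: regionOf_inR (hr j).
have hped : forall j, pedal (X j) = X j.+1.
  move=> j; rewrite (pedal_branch (inR_Cstar (hr j))) hreg {1}(oh_g h j) branch_g //.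
elim=> [|j [IH _]]; first by split => //.
by rewrite iterS IH hped hreg.
Qed.

Definition dec (b0 b1 : bool) : nat :=
  match b0, b1 with false, true => 0 | false, false => 1 | true, true => 2 | true, false => 3 end.

Lemma dec_le3 b0 b1 : (dec b0 b1 <= 3)%N.
Proof. by case: b0; case: b1. Qed.

Lemma ord2_cases (i : 'I_2) : i = ord0 \/ i = ord_max.
Proof.
case: i => [[|[|m]] hi]; [left | right | by []]; exact: val_inj.
Qed.

Lemma eta_dec n (W : 'M[bool]_(2, n)) (i : 'I_2) j :
  eta_col (dec (W ord0 j) (W ord_max j)) i = W i j.
Proof.
by case: (ord2_cases i) => ->; case: (W ord0 j); case: (W ord_max j).
Qed.

Lemma eta_col_inj g1 g2 : (g1 <= 3)%N -> (g2 <= 3)%N ->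
  eta_col g1 ord0 = eta_col g2 ord0 -> eta_col g1 ord_max = eta_col g2 ord_max -> g1 = g2.
Proof.
by case: g1 => [|[|[|[|g1]]]] //; case: g2 => [|[|[|[|g2]]]].
Qed.

Lemma dec_12 b0 b1 : (dec b0 b1 == 0)%N || (dec b0 b1 == 3)%N = false -> b0 = b1.
Proof. by case: b0; case: b1. Qed.

Lemma rows_periodic n (W : 'M[bool]_(2, n)) : (1 <= n)%N ->
  (forall j, W ord0 j = W ord_max j) -> periodic W.
Proof.
move=> hn h.
exists 0%N, n.-1, 2%N, 1%N, (\matrix_(i < 1, j < n.-1.+1) W ord0 (cast_ord (prednK hn) j)).
split => //; first by rewrite mul1n prednK.
move=> i j; rewrite mxE.
have -> : cast_ord (prednK hn) (inord (j %% n.-1.+1)) = j.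
  apply: val_inj => /=; rewrite inordK prednK //; first exact: modn_small.
  by rewrite ltn_pmod.
by case: (ord2_cases i) => ->; rewrite ?h.
Qed.

Lemma cols_periodic n d (W : 'M[bool]_(2, n)) : (0 < d)%N -> (d < n)%N -> (d %| n)%N ->
  (forall i (j j' : 'I_n), j %% d = j' %% d -> W i j = W i j')%N -> periodic W.
Proof.
move=> hd hdn hdiv h.
have hle : (d.-1.+1 <= n)%N by rewrite prednK // ltnW.
exists 1%N, d.-1, 1%N, (n %/ d)%N, (\matrix_(i < 2, j < d.-1.+1) W i (widen_ord hle j)).
case/dvdnP: hdiv => k hk.
split => //.
- by rewrite prednK // hk mulnK.
- apply/orP; right; rewrite hk mulnK //.
  by move: hdn; rewrite hk; case: k {hk} => [|[|k]] //; rewrite ?mul0n ?mul1n ?ltnn.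
- move=> i j; rewrite mxE.
  have -> : (inord (i %% 2) : 'I_2) = i.
    by apply: val_inj => /=; rewrite inordK modn_small // ltn_pmod.
  apply: h => /=.
  by rewrite inordK prednK // ?modn_mod // ltn_pmod.
Qed.

Lemma periodic_cases n (W : 'M[bool]_(2, n)) : periodic W ->
  (forall j, W ord0 j = W ord_max j) \/
  exists d, [/\ (0 < d)%N, (d < n)%N, (d %| n)%N &
     forall i (j j' : 'I_n), (j %% d = j' %% d)%N -> W i j = W i j'].
Proof.
case=> m' [n' [p [q [V [hp hq h2 hW]]]]].
case/orP: h2 => h2.
- left => j.
  have hm : m' = 0%N by nia.
  have e : (0 %% m'.+1 = 1 %% m'.+1)%N by rewrite hm.
  by rewrite !hW e.
- right; exists n'.+1; split => //.
  + nia.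
  + by rewrite -hq dvdn_mull.
  + by move=> i j j' e; rewrite !hW e.
Qed.

Lemma iter_mod (R : realType) (p : triple R) n m : iter n (@pedal R) p = p ->
  iter m (@pedal R) p = iter (m %% n) (@pedal R) p.
Proof.
move=> hp; rewrite {1}(divn_eq m n) addnC iterD; congr (iter _ _ _).
elim: (m %/ n)%N => [|k IH]; first by rewrite mul0n.
by rewrite mulSn iterD IH hp.
Qed.

Lemma part1 (R : realType) n (hn : (1 <= n)%N) (p : triple R) :
  inT n p -> primitive (eta (itinerary n p)).
Proof.
case=> hC hCs hper hex hP.
have hWij : forall i j, eta (itinerary n p) i j = eta_col (regionOf (iter j (@pedal R) p)) i.
  by move=> i j; rewrite mxE.
case: (periodic_cases hP) => [hrows | [d [hd hdn hdiv hcol]]].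
- have h12 : forall j, (j < n)%N -> regionOf (iter j (@pedal R) p) = 1%N \/
      regionOf (iter j (@pedal R) p) = 2%N.
    move=> j hj; have := hrows (Ordinal hj); rewrite !hWij /=.
    have := regionOf_le3 (iter j (@pedal R) p).
    by case: (regionOf _) => [|[|[|[|k]]]] //= _ H; auto.
  have hc : forall m, (m <= n)%N -> tc (iter m (@pedal R) p) = 2 ^+ m * tc p.
    elim=> [|m IH] hm; first by rewrite expr0 mul1r.
    rewrite iterS (pedal_branch (hCs m hm)).
    have hb : forall k (x : triple R), (k = 1 \/ k = 2)%N -> tc (branch k x) = 2 * tc x.
      by move=> k x [] ->.
    by rewrite (hb _ _ (h12 m hm)) IH ?exprS ?mulrA //; exact: ltnW.
  have := hc n (leqnn n); rewrite hper => e.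
  have [_ _ hc0 _] := inCP hC.
  have h1 : (1 : R) < 2 ^+ n by rewrite exprn_egt1 ?ltr1n // -lt0n.
  move: e hc0 h1; move: (tc p) (2 ^+ n : R) => a b; clear -a b => e ha hb; nra.
- apply: (hex d hd hdn).
  apply: (uniq_orbit hn (p := iter d (@pedal R) p) (q := p)).
  + move=> j hj.
    rewrite -iterD (iter_mod _ hper).
    have hjn : ((j + d) %% n < n)%N by rewrite ltn_pmod.
    split; [exact: hCs | exact: hCs |].
    apply: eta_col_inj; try exact: regionOf_le3.
    * have := hcol ord0 (Ordinal hjn) (Ordinal hj); rewrite !hWij /=; apply.
      by rewrite modn_dvdm // modnDr.
    * have := hcol ord_max (Ordinal hjn) (Ordinal hj); rewrite !hWij /=; apply.
      by rewrite modn_dvdm // modnDr.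
  + by rewrite -iterD addnC iterD hper.
  + exact: hper.
Qed.

Lemma part2 (R : realType) n (hn : (1 <= n)%N) (p q : triple R) :
  inT n p -> inT n q -> eta (itinerary n p) = eta (itinerary n q) -> p = q.
Proof.
case=> hC hCs hper hex; case=> hC' hCs' hper' hex' he.
apply: (uniq_orbit hn) => // j hj.
split; [exact: hCs | exact: hCs' |].
have h0 := congr1 (fun M : 'M[bool]_(2, n) => M ord0 (Ordinal hj)) he.
have h1 := congr1 (fun M : 'M[bool]_(2, n) => M ord_max (Ordinal hj)) he.
rewrite /= !mxE /= in h0 h1.
by apply: eta_col_inj; rewrite ?regionOf_le3.
Qed.

Lemma min_period (R : realType) (x : triple R) n d : (0 < d)%N ->
  iter n (@pedal R) x = x -> iter d (@pedal R) x = x ->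
  exists d0, [/\ (0 < d0)%N, (d0 <= d)%N, (d0 %| n)%N &
    forall j, iter j (@pedal R) x = iter (j %% d0) (@pedal R) x].
Proof.
move=> hd hn hdx.
have ex : exists m, (0 < m)%N && (iter m (@pedal R) x == x) by exists d; rewrite hd hdx eqxx.
case: (ex_minnP ex) => d0 /andP [hd0 /eqP hx0] hmin.
have hmod := fun j => iter_mod j hx0.
exists d0; split => //.
- by apply: hmin; rewrite hd hdx eqxx.
- apply/dvdnP; exists (n %/ d0)%N.
  have : (n %% d0 = 0)%N.
    case: (posnP (n %% d0)) => // hne.
    have : (d0 <= n %% d0)%N by apply: hmin; rewrite hne -hmod hn eqxx.
    by rewrite leqNgt ltn_pmod.
  by move=> h; rewrite {1}(divn_eq n d0) h addn0.
Qed.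

Lemma part3 (R : realType) n (hn : (1 <= n)%N) (W : 'M[bool]_(2, n)) :
  primitive W -> exists p : triple R, inT n p /\ eta (itinerary n p) = W.
Proof.
move=> hW.
pose idx j : 'I_n := Ordinal (ltn_pmod j hn).
pose w j := dec (W ord0 (idx j)) (W ord_max (idx j)).
have hidx : forall j : 'I_n, idx j = j by move=> j; apply: val_inj; rewrite /= modn_small.
have hidxp : forall j, idx (j + n)%N = idx j by move=> j; apply: val_inj; rewrite /= modnDr.
have hwp : forall j, w (j + n)%N = w j by move=> j; rewrite /w hidxp.
pose X := Xo R w n.
have hOH : OH X w n.
  constructor => //.
  - by move=> j; exact: dec_le3.
  - by move=> j; case: (Xo_spec R w j hn).
  - by move=> j; exact: Xo_step.
  - by move=> j; exact: Xo_per.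
have hj0 : exists j0, w j0 = 0%N \/ w j0 = 3%N.
  case: (boolP [exists j : 'I_n, (w j == 0%N) || (w j == 3%N)]).
  - by move/existsP => [j /orP [/eqP h|/eqP h]]; exists j; auto.
  - move/existsPn => h; exfalso; apply: hW; apply: (rows_periodic hn) => j.
    by move/negbTE: (h j); rewrite /w hidx; exact: dec_12.
have hit := oh_iter hOH hj0.
have hr := oh_region hOH hj0.
have hCs : forall j, inCstar (X j) := fun j => inR_Cstar (hr j).
have hXn : iter n (@pedal R) (X 0%N) = X 0%N by rewrite (hit n).1 -{1}(add0n n) (oh_p hOH).
have hWw : forall i (j : 'I_n), W i j = eta_col (regionOf (iter j (@pedal R) (X 0%N))) i.
  by move=> i j; rewrite (hit j).1 (hit j).2 /w hidx eta_dec.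
exists (X 0%N); split.
- split.
  + by case/andP: (hCs 0%N).
  + by move=> j _; rewrite (hit j).1.
  + exact: hXn.
  + move=> d hd hdn hXd.
    have [d0 [hd0 hd0d hdiv hmod]] := min_period hd hXn hXd.
    apply: hW; apply: (cols_periodic hd0 (leq_ltn_trans hd0d hdn) hdiv).
    by move=> i j j' e; rewrite !hWw hmod e -hmod.
- by apply/matrixP => i j; rewrite mxE /itinerary -hWw.
Qed.

Theorem mainTheorem9 (R : realType) (n : nat) (hn : (1 <= n)%N) :
  [/\ (forall p : triple R, inT n p -> primitive (eta (itinerary n p))),
      (forall p q : triple R, inT n p -> inT n q ->
          eta (itinerary n p) = eta (itinerary n q) -> p = q)
    & (forall W : 'M[bool]_(2, n), primitive W ->
          exists p : triple R, inT n p /\ eta (itinerary n p) = W)].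
Proof.
split.
- exact: part1.
- exact: part2.
- exact: part3.
Qed.
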